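(* Let $B$ be a ring and $S\subseteq S_0(B)$ a multiplicative subset of $B$ such that $S^{-1}B$ exists. If every left regular element of $S^{-1}B$ is regular, then every left regular element of $B$ is regular. The right-side version also holds: if $BS^{-1}$ exists and every right regular element of $BS^{-1}$ is regular, then every right regular element of $B$ is regular.
   Context: Rings are associative with identity. $S_0(B)$ is the set of regular elements (non-zero-divisors on both sides) of $B$. An element $x$ of a ring is left regular if $rx=0$ implies $r=0$, and right regular if $xr=0$ implies $r=0$. A multiplicative subset $S$ satisfies $1\in S$, $0\notin S$, and is closed under products. $S^{-1}B$ (respectively $BS^{-1}$) denotes the left (respectively right) ring of fractions of $B$ with respect to $S$. For $S$ consisting of regular elements, $S^{-1}B$ exists iff the left Ore condition holds: for all $a\in B$, $s\in S$ there are $s'\in S$, $a'\in B$ with $s'a=a's$. The right case is symmetric. *)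

(* Defs.v *)
From HB Require Import structures.
From mathcomp Require Import all_boot all_algebra.
Set Implicit Arguments. Unset Strict Implicit. Unset Printing Implicit Defensive.
Import GRing.Theory.
Local Open Scope ring_scope.

Definition left_regular (R : nzRingType) (x : R) : Prop :=
  forall r : R, r * x = 0 -> r = 0.
Definition right_regular (R : nzRingType) (x : R) : Prop :=
  forall r : R, x * r = 0 -> r = 0.
(* regular = non-zero-divisor on both sides, i.e. x \in S_0(R) *)
Definition regular (R : nzRingType) (x : R) : Prop :=
  left_regular x /\ right_regular x.

Definition multiplicative (R : nzRingType) (S : pred R) : Prop :=
  [/\ 1 \in S, 0 \notin S & forall a b, a \in S -> b \in S -> a * b \in S].

Definition is_inverse (R : nzRingType) (x u : R) : Prop :=
  u * x = 1 /\ x * u = 1.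

Definition left_ring_of_fractions (B Q : nzRingType) (f : {rmorphism B -> Q})
    (S : pred B) : Prop :=
  [/\ (forall s, s \in S -> exists u, is_inverse (f s) u),
      (forall q : Q, exists s b u, [/\ s \in S, is_inverse (f s) u & q = u * f b])
    & (forall b, f b = 0 <-> exists2 s, s \in S & s * b = 0)].

Definition right_ring_of_fractions (B Q : nzRingType) (f : {rmorphism B -> Q})
    (S : pred B) : Prop :=
  [/\ (forall s, s \in S -> exists u, is_inverse (f s) u),
      (forall q : Q, exists s b u, [/\ s \in S, is_inverse (f s) u & q = f b * u])
    & (forall b, f b = 0 <-> exists2 s, s \in S & b * s = 0)].

(* Main.v *)
Require Import Defs.
From mathcomp Require Import all_boot all_algebra.
Import GRing.Theory.
Import Defs.
Local Open Scope ring_scope.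

Theorem proposition4p5 :
  (forall (B Q : nzRingType) (f : {rmorphism B -> Q}) (S : pred B),
     Defs.multiplicative S ->
     (forall s, s \in S -> regular s) ->
     left_ring_of_fractions f S ->
     (forall q : Q, left_regular q -> regular q) ->
     forall x : B, left_regular x -> regular x)
  /\
  (forall (B Q : nzRingType) (f : {rmorphism B -> Q}) (S : pred B),
     Defs.multiplicative S ->
     (forall s, s \in S -> regular s) ->
     right_ring_of_fractions f S ->
     (forall q : Q, right_regular q -> regular q) ->
     forall x : B, right_regular x -> regular x).
Proof.
split.
- move=> B Q f S _ Sreg [Hinv Hrep Hker] HQ x Hx; split=> //.
  have Hfx : left_regular (f x).
    move=> q Hq.
    have [s [b [u [sS [us su] Hqe]]]] := Hrep q; subst q.
    have Hb : f (b * x) = 0.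
      rewrite rmorphM; have -> : f b * f x = f s * (u * f b * f x) by rewrite !mulrA su mul1r.
      by rewrite Hq mulr0.
    have [t tS Ht] := (proj1 (Hker _) Hb).
    have Htb : t * b = 0 by apply: Hx; rewrite -mulrA.
    have [v [vt tv]] := Hinv t tS.
    have : f b = 0 by rewrite -[f b]mul1r -vt -mulrA -rmorphM Htb rmorph0 mulr0.
    by move=> ->; rewrite mulr0.
  have [_ Hr] := HQ _ Hfx.
  move=> r Hr0.
  have : f r = 0 by apply: Hr; rewrite -rmorphM Hr0 rmorph0.
  move=> /(proj1 (Hker _)) [t tS Ht].
  by have [_ ] := Sreg t tS; apply.
- move=> B Q f S _ Sreg [Hinv Hrep Hker] HQ x Hx; split=> //.
  have Hfx : right_regular (f x).
    move=> q Hq.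
    have [s [b [u [sS [us su] Hqe]]]] := Hrep q; subst q.
    have Hb : f (x * b) = 0.
      rewrite rmorphM; have -> : f x * f b = f x * (f b * u) * f s by rewrite -!mulrA us mulr1.
      by rewrite Hq mul0r.
    have [t tS Ht] := (proj1 (Hker _) Hb).
    have Htb : b * t = 0 by apply: Hx; rewrite mulrA.
    have [v [vt tv]] := Hinv t tS.
    have : f b = 0 by rewrite -[f b]mulr1 -tv mulrA -rmorphM Htb rmorph0 mul0r.
    by move=> ->; rewrite mul0r.
  have [Hl _] := HQ _ Hfx.
  move=> r Hr0.
  have : f r = 0 by apply: Hl; rewrite -rmorphM Hr0 rmorph0.
  move=> /(proj1 (Hker _)) [t tS Ht].
  by have [Hl' _] := Sreg t tS; apply: Hl'.
Qed.
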